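(* Let $n>1$ be an integer and $D_n=\{f\in C([0,1];M_n): f(0)\text{ and }f(1)\text{ are scalar matrices}\}$. Then $TC(D_n)=\infty$.
   Context: All tensor products are minimal. For a unital $C^*$-algebra $A$ let $p_0,p_1:A\to A\otimes A$ be $p_0(a)=a\otimes 1$, $p_1(a)=1\otimes a$, and for $t\in[0,1]$ and a $C^*$-algebra $B$ let $\mathrm{ev}_t:B\otimes C[0,1]\to B$ be evaluation at $t$. The topological complexity $TC(A)$ is the minimal number $n$ such that there exist $C^*$-algebras $B_1,\dots,B_n$ with surjective $*$-homomorphisms $q_i:A\otimes A\to B_i$ satisfying $\bigcap_{i=1}^n\ker q_i=\{0\}$, together with $*$-homomorphisms $\sigma_i:A\to B_i\otimes C[0,1]$ such that $\mathrm{ev}_k\circ\sigma_i=q_i\circ p_k$ for $k=0,1$ and all $i$; $TC(A)=\infty$ if no such $n$ exists. *)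

(* Defs.v *)
From HB Require Import structures.
From mathcomp Require Import all_boot all_order all_algebra.
From mathcomp Require Import reals complex mxtens.

Set Implicit Arguments.
Unset Strict Implicit.
Unset Printing Implicit Defensive.

Import Order.TTheory GRing.Theory Num.Theory.
Local Open Scope ring_scope.
Local Open Scope complex_scope.

(* Abstract C*-algebras (possibly non-unital, possibly zero) over C.  *)
Record cstar_alg (R : realType) := CStarAlg {
  cs_car :> lmodType R[i];
  cs_mul : cs_car -> cs_car -> cs_car;
  cs_star : cs_car -> cs_car;
  cs_norm : cs_car -> R;
  cs_mulA : forall x y z, cs_mul x (cs_mul y z) = cs_mul (cs_mul x y) z;
  cs_mulDl : forall x y z, cs_mul (x + y) z = cs_mul x z + cs_mul y z;
  cs_mulDr : forall x y z, cs_mul x (y + z) = cs_mul x y + cs_mul x z;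
  cs_mulZl : forall (a : R[i]) x y, cs_mul (a *: x) y = a *: cs_mul x y;
  cs_mulZr : forall (a : R[i]) x y, cs_mul x (a *: y) = a *: cs_mul x y;
  cs_starK : forall x, cs_star (cs_star x) = x;
  cs_starD : forall x y, cs_star (x + y) = cs_star x + cs_star y;
  cs_starZ : forall (a : R[i]) x, cs_star (a *: x) = (a^*) *: cs_star x;
  cs_starM : forall x y, cs_star (cs_mul x y) = cs_mul (cs_star y) (cs_star x);
  cs_norm_eq0 : forall x, cs_norm x = 0 -> x = 0;
  cs_normZ : forall (a : R[i]) x, (cs_norm (a *: x))%:C = `|a| * (cs_norm x)%:C;
  cs_normD : forall x y, cs_norm (x + y) <= cs_norm x + cs_norm y;
  cs_normM : forall x y, cs_norm (cs_mul x y) <= cs_norm x * cs_norm y;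
  cs_normC : forall x, cs_norm (cs_mul (cs_star x) x) = cs_norm x ^+ 2;
  cs_complete : forall u : nat -> cs_car,
    (forall e : R, 0 < e -> exists N, forall m k, (N <= m)%N -> (N <= k)%N ->
        cs_norm (u m - u k) < e) ->
    exists l, forall e : R, 0 < e -> exists N, forall m, (N <= m)%N ->
        cs_norm (u m - l) < e
}.

Definition unit_itv (R : realType) := {t : R | ((0 : R) <= t) && (t <= 1)}.

Lemma unit_itv0_proof (R : realType) : ((0 : R) <= 0) && ((0 : R) <= 1).
Proof. by rewrite lexx ler01. Qed.
Lemma unit_itv1_proof (R : realType) : ((0 : R) <= 1) && ((1 : R) <= 1).
Proof. by rewrite lexx ler01. Qed.

Definition itv0 (R : realType) : unit_itv R := exist _ 0 (unit_itv0_proof R).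
Definition itv1 (R : realType) : unit_itv R := exist _ 1 (unit_itv1_proof R).

Definition mx_cont1 (R : realType) k (f : unit_itv R -> 'M[R[i]]_k) :=
  forall (x : unit_itv R) (e : R), 0 < e -> exists2 d : R, 0 < d &
    forall y : unit_itv R, `|sval y - sval x| < d ->
      forall i j, `|f y i j - f x i j| < e%:C.

Definition cs_cont (R : realType) (B : cstar_alg R) (g : unit_itv R -> B) :=
  forall (x : unit_itv R) (e : R), 0 < e -> exists2 d : R, 0 < d &
    forall y : unit_itv R, `|sval y - sval x| < d -> cs_norm (g y - g x) < e.

Definition mx_star (R : realType) k (a : 'M[R[i]]_k) : 'M[R[i]]_k :=
  (map_mx (@conjc R) a)^T.

Definition Dn (R : realType) (n : nat) : (unit_itv R -> 'M[R[i]]_n) -> Prop :=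
  fun f => mx_cont1 f /\ (exists a : R[i], f (itv0 R) = a%:M)
                     /\ (exists b : R[i], f (itv1 R) = b%:M).

(* Minimal tensor square of a C*-subalgebra A of C([0,1]; M_n):       *)
(* realized inside C([0,1]^2; M_n (x) M_n) = C([0,1]^2; M_(n*n))       *)
(* (Kronecker product) as the uniform closure of the algebraic        *)
(* tensor product  A (.) A = span { (s,t) |-> f(s) (x) g(t) }.         *)
Definition tens_sq (R : realType) (n : nat) (A : (unit_itv R -> 'M[R[i]]_n) -> Prop)
  : (unit_itv R * unit_itv R -> 'M[R[i]]_(n * n)) -> Prop :=
  fun F => forall e : R, 0 < e ->
    exists (k : nat) (f g : 'I_k -> unit_itv R -> 'M[R[i]]_n),
      (forall l, A (f l) /\ A (g l)) /\
      forall x i j, `|F x i j - (\sum_(l < k) (f l x.1 *t g l x.2)) i j| < e%:C.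

Definition p0 (R : realType) n (f : unit_itv R -> 'M[R[i]]_n)
  : unit_itv R * unit_itv R -> 'M[R[i]]_(n * n) := fun x => f x.1 *t (1%:M : 'M_n).
Definition p1 (R : realType) n (f : unit_itv R -> 'M[R[i]]_n)
  : unit_itv R * unit_itv R -> 'M[R[i]]_(n * n) := fun x => (1%:M : 'M_n) *t f x.2.

Definition star_hom_on (R : realType) (X : Type) (k : nat)
  (P : (X -> 'M[R[i]]_k) -> Prop) (B : cstar_alg R) (h : (X -> 'M[R[i]]_k) -> B) :=
  (forall F G, P F -> P G -> h (fun x => F x + G x) = h F + h G) /\
  (forall (a : R[i]) F, P F -> h (fun x => a *: F x) = a *: h F) /\
  (forall F G, P F -> P G -> h (fun x => F x *m G x) = cs_mul (h F) (h G)) /\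
  (forall F, P F -> h (fun x => mx_star (F x)) = cs_star (h F)).

(* TC(A) <= m : there are C*-algebras B_1..B_m, surjective *-homomorphisms
   q_i : A (x) A -> B_i with trivial joint kernel, and *-homomorphisms
   sigma_i : A -> B_i (x) C[0,1] = C([0,1]; B_i) with ev_k o sigma_i = q_i o p_k. *)
Definition TC_le (R : realType) (n : nat) (A : (unit_itv R -> 'M[R[i]]_n) -> Prop)
  (m : nat) : Prop :=
  exists (B : 'I_m -> cstar_alg R)
         (q : forall i, (unit_itv R * unit_itv R -> 'M[R[i]]_(n * n)) -> B i)
         (sigma : forall i, (unit_itv R -> 'M[R[i]]_n) -> unit_itv R -> B i),
    (forall i, star_hom_on (tens_sq A) (q i)) /\
    (forall i (b : B i), exists2 F, tens_sq A F & q i F = b) /\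
    (forall F, tens_sq A F -> (forall i, q i F = 0) -> F = (fun _ => 0)) /\
    (forall i f, A f -> cs_cont (sigma i f)) /\
    (forall i t, star_hom_on A (fun f => sigma i f t)) /\
    (forall i f, A f -> sigma i f (itv0 R) = q i (p0 f)) /\
    (forall i f, A f -> sigma i f (itv1 R) = q i (p1 f)).

Definition TC_infinite (R : realType) (n : nat)
  (A : (unit_itv R -> 'M[R[i]]_n) -> Prop) : Prop :=
  forall m : nat, ~ TC_le A m.

(* Main.v *)
Require Import Defs.
From HB Require Import structures.
From mathcomp Require Import all_boot all_order all_algebra.
From mathcomp Require Import reals complex mxtens classical_sets.
From mathcomp Require Import ring lra.
From Stdlib Require Import FunctionalExtensionality ClassicalEpsilon Classical.

Set Implicit Arguments.
Unset Strict Implicit.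
Unset Printing Implicit Defensive.
Import Order.TTheory GRing.Theory Num.Theory.
Local Open Scope ring_scope.
Local Open Scope complex_scope.

Section Aux.
Variable R : realType.
Local Notation C := (R[i]).
Local Notation nc := (@Normc.normc R).

Lemma nc_ge0 (z : C) : 0 <= nc z.
Proof. by case: z => a b; rewrite /Normc.normc sqrtr_ge0. Qed.

Lemma nc_lt (z : C) (e : R) : (`|z| < e%:C) = (nc z < e).
Proof. by rewrite -ltcR. Qed.

Lemma nc_le (z : C) (e : R) : (`|z| <= e%:C) = (nc z <= e).
Proof. by rewrite -lecR. Qed.

Lemma ncD (x y : C) : nc (x + y) <= nc x + nc y.
Proof. exact: le_normcD. Qed.

Lemma ncM (x y : C) : nc (x * y) = nc x * nc y.
Proof. exact: Normc.normcM. Qed.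

Lemma ncN (x : C) : nc (- x) = nc x.
Proof. exact: normcN. Qed.

Lemma ncB (x y : C) : nc (x - y) = nc (y - x).
Proof. by rewrite -ncN opprB. Qed.

Lemma nc0 : nc 0 = 0.
Proof. exact: Normc.normc0. Qed.

Lemma nc_eq0 (z : C) : nc z = 0 -> z = 0.
Proof. exact: Normc.eq0_normc. Qed.

Lemma nc_real (r : R) : nc r%:C = `|r|.
Proof. by rewrite /Normc.normc /= expr0n /= addr0 sqrtr_sqr. Qed.

Lemma nc_sum (I : finType) (F : I -> C) :
  nc (\sum_i F i) <= \sum_i nc (F i).
Proof.
elim/big_rec2: _ => [|i y1 y2 _ H]; first by rewrite nc0.
by apply: (le_trans (ncD _ _)); rewrite lerD2l.
Qed.

Lemma nc_small (z : C) : (forall e : R, 0 < e -> nc z < e) -> z = 0.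
Proof.
move=> H; apply: nc_eq0; apply/eqP; rewrite eq_le nc_ge0 andbT.
apply/negP => /negP; rewrite -ltNge => hp.
by have := H _ hp; rewrite ltxx.
Qed.


Lemma real_ind (P : R -> Prop) :
  (forall a b, b <= a -> P a -> P b) -> P 0 ->
  (forall x, 0 <= x -> x <= 1 -> exists2 d, 0 < d &
     forall a b, 0 <= a -> `|a - x| < d -> `|b - x| < d -> P a -> P b) ->
  P 1.
Proof.
move=> Pdown P0 Pstep.
pose E : set R := fun s => 0 <= s /\ s <= 1 /\ P s.
have E0 : E 0 by split; [|split].
have hs : has_sup E.
  by split; [exists 0 | exists 1 => y [_ []]].
have s_ub := sup_upper_bound hs.
have s0 : 0 <= sup E by apply: s_ub.
have s1 : sup E <= 1 by apply: ge_sup; [exists 0 | move=> y [_ []]].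
have [d d0 Hd] := Pstep _ s0 s1.
have [e [e0 [e1 Pe]] he] := sup_adherent d0 hs.
have es : e <= sup E by apply: s_ub.
have hes : `|e - sup E| < d by rewrite ltr_norml; apply/andP; split; lra.
case: (lerP (sup E + d / 2) 1) => hb.
  have Pb : P (sup E + d / 2).
    apply: (Hd e) => //; rewrite ltr_norml; apply/andP; split; lra.
  have : sup E + d / 2 <= sup E by apply: s_ub; split; [lra|split].
  lra.
apply: (Hd e) => //; rewrite ltr_norml; apply/andP; split; lra.
Qed.


Lemma le_sum_nonneg (I : finType) (F : I -> R) (i : I) :
  (forall j, 0 <= F j) -> F i <= \sum_j F j.
Proof.
move=> H; rewrite (bigD1 i) //= ler_wpDr //; exact: sumr_ge0.
Qed.

Lemma mx_bound1 k l (A : 'M[C]_(k, l)) :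
  exists M, 0 <= M /\ forall i j, nc (A i j) <= M.
Proof.
exists (\sum_i \sum_j nc (A i j)); split.
  by apply: sumr_ge0 => i _; apply: sumr_ge0 => j _; apply: nc_ge0.
move=> i j.
have h1 := @le_sum_nonneg _ (fun j => nc (A i j)) j (fun j => nc_ge0 _).
have h2 := @le_sum_nonneg _ (fun i => \sum_j nc (A i j)) i
  (fun i' => sumr_ge0 _ (fun j' _ => nc_ge0 (A i' j'))).
exact: le_trans h1 h2.
Qed.

Lemma itv_eq (t u : unit_itv R) : sval t = sval u -> t = u.
Proof. by move=> h; apply: val_inj. Qed.

Definition mk_itv (x : R) (h0 : 0 <= x) (h1 : x <= 1) : unit_itv R :=
  exist _ x (introT andP (conj h0 h1)).

Lemma itv_ge0 (t : unit_itv R) : 0 <= sval t.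
Proof. by case: t => x /= /andP[]. Qed.
Lemma itv_le1 (t : unit_itv R) : sval t <= 1.
Proof. by case: t => x /= /andP[]. Qed.

Lemma cont_bound k (f : unit_itv R -> 'M[C]_k) :
  mx_cont1 f -> exists M, 0 <= M /\ forall t i j, nc (f t i j) <= M.
Proof.
move=> fc.
pose P s := exists M, 0 <= M /\ forall t : unit_itv R, sval t <= s ->
  forall i j, nc (f t i j) <= M.
suff [M [M0 HM]] : P 1 by exists M; split => // t; apply: HM; apply: itv_le1.
apply: real_ind.
- move=> a b ba [M [M0 HM]]; exists M; split => // t tb; apply: HM.
  exact: le_trans ba.
- have [M [M0 HM]] := mx_bound1 (f (itv0 R)); exists M; split => // t t0.
  have -> : t = itv0 R by apply: itv_eq; apply/eqP; rewrite eq_le t0 itv_ge0.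
  exact: HM.
move=> x x0 x1; pose xx := mk_itv x0 x1.
have [d d0 Hd] := fc xx 1 ltr01.
exists d => // a b a0 ha hb [Ma [Ma0 HMa]].
have [Mx [Mx0 HMx]] := mx_bound1 (f xx).
exists (Ma + Mx + 1); split; first lra.
move=> t tb i j; case: (lerP (sval t) a) => ta.
  by have := HMa t ta i j; lra.
have htx : `|sval t - sval xx| < d.
  move: ha hb; rewrite /= !ltr_norml => /andP[h1 h2] /andP[h3 h4].
  by apply/andP; split; lra.
have := Hd t htx i j; rewrite nc_lt => h.
have := ncD (f t i j - f xx i j) (f xx i j); rewrite subrK => h2.
have := HMx i j; lra.
Qed.


Lemma prod_err p q r (A A' : 'M[C]_(p, q)) (B B' : 'M[C]_(q, r))
    (MA MB e1 e2 : R) :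
  (forall i j, nc (A' i j) <= MA) -> (forall i j, nc (B i j) <= MB) ->
  (forall i j, nc (A i j - A' i j) <= e1) ->
  (forall i j, nc (B i j - B' i j) <= e2) ->
  forall i j, nc ((A *m B) i j - (A' *m B') i j) <= q%:R * (e1 * MB + MA * e2).
Proof.
move=> hA' hB h1 h2 i j; rewrite !mxE -sumrB.
apply: le_trans (nc_sum _) _.
have -> : q%:R * (e1 * MB + MA * e2) = \sum_(k < q) (e1 * MB + MA * e2).
  by rewrite sumr_const card_ord mulr_natl.
apply: ler_sum => k _.
have -> : A i k * B k j - A' i k * B' k j =
  (A i k - A' i k) * B k j + A' i k * (B k j - B' k j).
  by rewrite mulrBl mulrBr addrA subrK.
apply: le_trans (ncD _ _) _; rewrite !ncM.
apply: lerD; apply: ler_pM => //; exact: nc_ge0.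
Qed.


Lemma eps_split (e K : R) : 0 < e -> 0 <= K ->
  exists e1, [/\ 0 < e1, e1 <= 1, e1 <= e & e1 * K < e].
Proof.
move=> e0 K0.
have [m [m0 m1 me]] : exists m, [/\ 0 < m, m <= 1 & m <= e].
  case: (lerP e 1) => he; first by exists e; split.
  by exists 1; split => //; lra.
have K1 : 0 < K + 1 by lra.
exists (m / (K + 1)).
have h : m / (K + 1) * (K + 1) = m by rewrite mulfVK // gt_eqF.
have hp : 0 < m / (K + 1) by apply: divr_gt0.
have hle : m / (K + 1) <= m.
  by rewrite ler_pdivrMr // ler_peMr //; lra.
split => //; [lra | lra | nra].
Qed.

Lemma cont_prod k (f g : unit_itv R -> 'M[C]_k) :
  mx_cont1 f -> mx_cont1 g -> mx_cont1 (fun t => f t *m g t).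
Proof.
move=> fc gc x e e0.
have [Mf [Mf0 HMf]] := cont_bound fc.
have [Mg [Mg0 HMg]] := cont_bound gc.
have K0 : 0 <= k%:R * (Mf + Mg) by apply: mulr_ge0; [apply: ler0n | lra].
have [e1 [e10 _ _ he1]] := eps_split e0 K0.
have [d1 d10 Hd1] := fc x e1 e10.
have [d2 d20 Hd2] := gc x e1 e10.
exists (Num.min d1 d2); first by rewrite lt_min d10 d20.
move=> y; rewrite lt_min => /andP[hy1 hy2] i j.
rewrite nc_lt.
have H1 : forall i j, nc (f y i j - f x i j) <= e1.
  by move=> i' j'; apply: ltW; rewrite -nc_lt; exact: Hd1.
have H2 : forall i j, nc (g y i j - g x i j) <= e1.
  by move=> i' j'; apply: ltW; rewrite -nc_lt; exact: Hd2.
have := @prod_err _ _ _ (f y) (f x) (g y) (g x) Mf Mg e1 e1 (HMf x) (HMg y)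
  H1 H2 i j.
move=> h; apply: le_lt_trans h _.
have -> : k%:R * (e1 * Mg + Mf * e1) = e1 * (k%:R * (Mf + Mg)) by ring.
exact: he1.
Qed.


Lemma Dn_mul n (f g : unit_itv R -> 'M[C]_n) :
  Dn f -> Dn g -> Dn (fun t => f t *m g t).
Proof.
move=> [fc [[a fa] [b fb]]] [gc [[a' ga] [b' gb]]]; split; first exact: cont_prod.
split; [exists (a * a') | exists (b * b')]; by rewrite /= ?fa ?ga ?fb ?gb scalar_mxM.
Qed.

Lemma Dn_scale n (a : C) (f : unit_itv R -> 'M[C]_n) :
  Dn f -> Dn (fun t => a *: f t).
Proof.
move=> [fc [[a0 fa] [b0 fb]]]; split; last first.
  by split; [exists (a * a0) | exists (a * b0)];
     rewrite /= ?fa ?fb scale_scalar_mx.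
move=> x e e0.
have [e1 [e10 _ _ he1]] := eps_split e0 (nc_ge0 a).
have [d d0 Hd] := fc x e1 e10.
exists d => // y hy i j; rewrite !mxE -mulrBr nc_lt ncM.
have := Hd y hy i j; rewrite nc_lt => h.
apply: le_lt_trans he1; rewrite mulrC; apply: ler_wpM2r; [exact: nc_ge0 | exact: ltW].
Qed.

Definition cf (c : R -> R) n (M : 'M[C]_n) : unit_itv R -> 'M[C]_n :=
  fun t => (c (sval t))%:C *: M.

Lemma Dn_cf (c : R -> R) n (M : 'M[C]_n) :
  (forall x y, 0 <= x -> x <= 1 -> 0 <= y -> y <= 1 ->
     `|c y - c x| <= 2 * `|y - x|) ->
  (exists a, (c 0)%:C *: M = a%:M) -> (exists b, (c 1)%:C *: M = b%:M) ->
  Dn (cf c M).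
Proof.
move=> Lc h0 h1; split; last by split.
move=> x e e0.
have [MM [MM0 HMM]] := mx_bound1 M.
have K0 : 0 <= 2 * MM by lra.
have [e1 [e10 _ _ he1]] := eps_split e0 K0.
exists e1 => // y hy i j.
rewrite !mxE -mulrBl -rmorphB nc_lt ncM nc_real.
have := Lc _ _ (itv_ge0 x) (itv_le1 x) (itv_ge0 y) (itv_le1 y).
have := HMM i j; have := nc_ge0 (M i j); have := normr_ge0 (c (sval y) - c (sval x)).
move=> ha hb hc hd; apply: (le_lt_trans _ he1).
have hy' : 2 * `|sval y - sval x| <= 2 * e1 by lra.
nra.
Qed.

Lemma Dn_const1 n : Dn (fun _ : unit_itv R => (1%:M : 'M[C]_n)).
Proof.
split; last by split; exists 1.
by move=> x e e0; exists 1 => // y _ i j; rewrite subrr normr0 ltcR.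
Qed.


Definition TS n k (f g : 'I_k -> unit_itv R -> 'M[C]_n) (x : unit_itv R * unit_itv R)
  : 'M[C]_(n * n) := \sum_(l < k) (f l x.1 *t g l x.2).

Lemma tens_sqE n (F : unit_itv R * unit_itv R -> 'M[C]_(n * n)) :
  tens_sq (@Dn R n) F <-> forall e : R, 0 < e ->
    exists k (f g : 'I_k -> unit_itv R -> 'M[C]_n),
      (forall l, Dn (f l) /\ Dn (g l)) /\
      forall x i j, nc (F x i j - TS f g x i j) < e.
Proof.
split => H e e0; have [k [f [g [h1 h2]]]] := H e e0; exists k, f, g; split => //.
  by move=> x i j; rewrite -nc_lt; apply: h2.
by move=> x i j; rewrite nc_lt; apply: h2.
Qed.

Lemma tens_add n (F G : unit_itv R * unit_itv R -> 'M[C]_(n * n)) :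
  tens_sq (@Dn R n) F -> tens_sq (@Dn R n) G ->
  tens_sq (@Dn R n) (fun x => F x + G x).
Proof.
move=> /tens_sqE hF /tens_sqE hG; apply/tens_sqE => e e0.
have e2 : 0 < e / 2 by lra.
have [k1 [f1 [g1 [hfg1 ap1]]]] := hF _ e2.
have [k2 [f2 [g2 [hfg2 ap2]]]] := hG _ e2.
exists (k1 + k2)%N,
  (fun l => match split l with inl u => f1 u | inr v => f2 v end),
  (fun l => match split l with inl u => g1 u | inr v => g2 v end).
split; first by move=> l; case: (split l) => u.
move=> x i j.
have sl : forall u, split (lshift k2 u) = inl u := fun u => unsplitK (inl u).
have sr : forall v, split (rshift k1 v) = inr v := fun v => unsplitK (inr v).
match goal with |- context [TS ?a ?b x] =>
  have -> : TS a b x = TS f1 g1 x + TS f2 g2 x end.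
  rewrite /TS sumr_add; congr (_ + _); apply: eq_bigr => u _; by rewrite ?sl ?sr.
rewrite !mxE.
have -> : F x i j + G x i j - (TS f1 g1 x i j + TS f2 g2 x i j) =
  (F x i j - TS f1 g1 x i j) + (G x i j - TS f2 g2 x i j) by ring.
apply: le_lt_trans (ncD _ _) _.
have := ap1 x i j; have := ap2 x i j; lra.
Qed.


Lemma tensZl m1 m2 p1 p2 (a : C) (A : 'M[C]_(m1, m2)) (B : 'M[C]_(p1, p2)) :
  (a *: A) *t B = a *: (A *t B).
Proof. by apply/matrixP => i j; rewrite !mxE mulrA. Qed.

Lemma tens_scale n (a : C) (F : unit_itv R * unit_itv R -> 'M[C]_(n * n)) :
  tens_sq (@Dn R n) F -> tens_sq (@Dn R n) (fun x => a *: F x).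
Proof.
move=> /tens_sqE hF; apply/tens_sqE => e e0.
have [e1 [e10 _ _ he1]] := eps_split e0 (nc_ge0 a).
have [k [f [g [hfg ap]]]] := hF _ e10.
exists k, (fun l t => a *: f l t), g; split.
  by move=> l; have [h1 h2] := hfg l; split => //; apply: Dn_scale.
move=> x i j.
have -> : TS (fun l t => a *: f l t) g x = a *: TS f g x.
  by rewrite /TS scaler_sumr; apply: eq_bigr => l _; rewrite tensZl.
rewrite !mxE -mulrBr ncM; apply: le_lt_trans he1.
rewrite mulrC; apply: ler_wpM2r; [exact: nc_ge0 | exact: ltW].
Qed.

Lemma TS_bound n k (f g : 'I_k -> unit_itv R -> 'M[C]_n) :
  (forall l, Dn (f l) /\ Dn (g l)) ->
  exists M, 0 <= M /\ forall x i j, nc (TS f g x i j) <= M.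
Proof.
move=> hfg.
have hb : forall l, exists M : R, 0 <= M /\ (forall t i j, nc (f l t i j) <= M)
    /\ (forall t i j, nc (g l t i j) <= M).
  move=> l; have [[fc _] [gc _]] := hfg l.
  have [M1 [M10 H1]] := cont_bound fc; have [M2 [M20 H2]] := cont_bound gc.
  exists (M1 + M2); split; first lra.
  split => t i j; [have := H1 t i j | have := H2 t i j]; lra.
have [Mb HMb] := fin_all_exists hb.
exists (\sum_l Mb l * Mb l); split.
  by apply: sumr_ge0 => l _; have [h _] := HMb l; apply: mulr_ge0.
move=> x i j; rewrite /TS summxE; apply: le_trans (nc_sum _) _.
apply: ler_sum => l _; rewrite mxE ncM.
have [h0 [h1 h2]] := HMb l.
apply: ler_pM; [exact: nc_ge0 | exact: nc_ge0 | exact: h1 | exact: h2].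
Qed.

Lemma tens_bound n (F : unit_itv R * unit_itv R -> 'M[C]_(n * n)) :
  tens_sq (@Dn R n) F -> exists M, 0 <= M /\ forall x i j, nc (F x i j) <= M.
Proof.
move=> /tens_sqE hF; have [k [f [g [hfg ap]]]] := hF 1 ltr01.
have [M [M0 HM]] := TS_bound hfg.
exists (M + 1); split; first lra.
move=> x i j; have := ncD (F x i j - TS f g x i j) (TS f g x i j).
rewrite subrK; have := ap x i j; have := HM x i j; lra.
Qed.


Lemma TS_mul n k1 k2 (f1 g1 : 'I_k1 -> unit_itv R -> 'M[C]_n)
    (f2 g2 : 'I_k2 -> unit_itv R -> 'M[C]_n) x :
  TS f1 g1 x *m TS f2 g2 x =
  TS (fun l t => f1 (mxtens_unindex l).1 t *m f2 (mxtens_unindex l).2 t)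
     (fun l t => g1 (mxtens_unindex l).1 t *m g2 (mxtens_unindex l).2 t) x.
Proof.
rewrite /TS mulmx_suml.
transitivity (\sum_(u < k1) \sum_(v < k2)
   ((f1 u x.1 *m f2 v x.1) *t (g1 u x.2 *m g2 v x.2))).
  apply: eq_bigr => u _; rewrite mulmx_sumr; apply: eq_bigr => v _.
  by rewrite tensmx_mul.
rewrite pair_big; apply: reindex => //=.
by exists (@mxtens_index k1 k2) => i; rewrite (mxtens_indexK, mxtens_unindexK).
Qed.

Lemma tens_mul n (F G : unit_itv R * unit_itv R -> 'M[C]_(n * n)) :
  tens_sq (@Dn R n) F -> tens_sq (@Dn R n) G ->
  tens_sq (@Dn R n) (fun x => F x *m G x).
Proof.
move=> hF0 hG0.
have [MF [MF0 HMF]] := tens_bound hF0.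
have [MG [MG0 HMG]] := tens_bound hG0.
move: hF0 hG0 => /tens_sqE hF /tens_sqE hG; apply/tens_sqE => e e0.
have K0 : 0 <= (n * n)%:R * (MF + 1 + MG) by apply: mulr_ge0; [apply: ler0n|lra].
have [d [d0 d1 _ hd]] := eps_split e0 K0.
have [k1 [f1 [g1 [hfg1 ap1]]]] := hF _ d0.
have [k2 [f2 [g2 [hfg2 ap2]]]] := hG _ d0.
exists (k1 * k2)%N,
  (fun l t => f1 (mxtens_unindex l).1 t *m f2 (mxtens_unindex l).2 t),
  (fun l t => g1 (mxtens_unindex l).1 t *m g2 (mxtens_unindex l).2 t).
split.
  move=> l; have [h1 h2] := hfg1 (mxtens_unindex l).1.
  have [h3 h4] := hfg2 (mxtens_unindex l).2.
  by split; apply: Dn_mul.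
move=> x i j; rewrite -TS_mul.
have hA' : forall i j, nc (TS f1 g1 x i j) <= MF + 1.
  move=> i' j'; have := ncD (TS f1 g1 x i' j' - F x i' j') (F x i' j').
  rewrite subrK ncB; have := ap1 x i' j'; have := HMF x i' j'; lra.
have h1 : forall i j, nc (F x i j - TS f1 g1 x i j) <= d.
  by move=> i' j'; apply: ltW.
have h2 : forall i j, nc (G x i j - TS f2 g2 x i j) <= d.
  by move=> i' j'; apply: ltW.
have := prod_err hA' (HMG x) h1 h2 i j => h.
apply: le_lt_trans h _.
have -> : (n * n)%:R * (d * MG + (MF + 1) * d) = d * ((n * n)%:R * (MF + 1 + MG))
  by ring.
exact: hd.
Qed.

Lemma tens_p0 n (f : unit_itv R -> 'M[C]_n) : Dn f -> tens_sq (@Dn R n) (p0 f).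
Proof.
move=> hf; apply/tens_sqE => e e0.
exists 1%N, (fun _ => f), (fun _ _ => 1%:M); split.
  by move=> _; split => //; apply: Dn_const1.
by move=> x i j; rewrite /TS big_ord1 /p0 subrr nc0.
Qed.

Lemma tens_p1 n (f : unit_itv R -> 'M[C]_n) : Dn f -> tens_sq (@Dn R n) (p1 f).
Proof.
move=> hf; apply/tens_sqE => e e0.
exists 1%N, (fun _ _ => 1%:M), (fun _ => f); split.
  by move=> _; split => //; apply: Dn_const1.
by move=> x i j; rewrite /TS big_ord1 /p1 subrr nc0.
Qed.


Lemma tens_scalars n (a b : C) : (a%:M : 'M_n) *t (b%:M : 'M_n) = (a * b)%:M.
Proof.
apply/matrixP => i j.
case: (mxtens_indexP i) => i1 i2; case: (mxtens_indexP j) => j1 j2.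
rewrite tensmxE !mxE.
rewrite (inj_eq (can_inj (@mxtens_indexK n n))) xpair_eqE.
by case: (i1 == j1); case: (i2 == j2); rewrite /= ?mulr1n ?mulr0n ?mul0r ?mulr0.
Qed.

Lemma tens_scalar01 n (F : unit_itv R * unit_itv R -> 'M[C]_(n * n)) (i0 : 'I_(n * n)) :
  tens_sq (@Dn R n) F -> F (itv0 R, itv1 R) = (F (itv0 R, itv1 R) i0 i0)%:M.
Proof.
move=> /tens_sqE hF.
have key : forall e : R, 0 < e -> exists c : C, forall i j,
    nc (F (itv0 R, itv1 R) i j - (c%:M : 'M_(n * n)) i j) < e.
  move=> e e0; have [k [f [g [hfg ap]]]] := hF e e0.
  have ha : forall l, exists a : C, f l (itv0 R) = a%:M.
    by move=> l; have [[_ [h _]] _] := hfg l.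
  have hb : forall l, exists b : C, g l (itv1 R) = b%:M.
    by move=> l; have [_ [_ [_ h]]] := hfg l.
  have [a Ha] := fin_all_exists ha; have [b Hb] := fin_all_exists hb.
  exists (\sum_l a l * b l) => i j.
  have <- : TS f g (itv0 R, itv1 R) = (\sum_l a l * b l)%:M.
    rewrite /TS raddf_sum; apply: eq_bigr => l _ /=.
    by rewrite Ha Hb tens_scalars.
  exact: ap.
apply/matrixP => i j; rewrite [RHS]mxE.
case: (eqVneq i j) => [<-|hij].
  rewrite mulr1n; apply/eqP; rewrite -subr_eq0; apply/eqP; apply: nc_small => e e0.
  have e2 : 0 < e / 2 by lra.
  have [c Hc] := key _ e2.
  have := Hc i i; have := Hc i0 i0; rewrite !mxE !eqxx !mulr1n => h1 h2.
  have -> : F (itv0 R, itv1 R) i i - F (itv0 R, itv1 R) i0 i0 =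
     (F (itv0 R, itv1 R) i i - c) - (F (itv0 R, itv1 R) i0 i0 - c) by ring.
  apply: le_lt_trans (ncD _ _) _; rewrite ncN; lra.
rewrite mulr0n; apply: nc_small => e e0.
have [c Hc] := key _ e0.
by have := Hc i j; rewrite mxE (negbTE hij) mulr0n subr0.
Qed.


Lemma zmod_id (V : zmodType) (l w a b : V) : l - (w + b) = (l - (w + a)) + (a - b).
Proof. by rewrite !opprD !addrA subrK. Qed.

Section CS.
Variable B : cstar_alg R.
Implicit Types x y w : B.

Lemma cs_mul0x y : cs_mul (0 : B) y = 0.
Proof.
have h := cs_mulDl (0 : B) 0 y; rewrite addr0 in h.
by have := congr1 (fun z => z - cs_mul 0 y) h; rewrite subrr addrK.
Qed.

Lemma cs_mulx0 x : cs_mul x (0 : B) = 0.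
Proof.
have h := cs_mulDr x (0 : B) 0; rewrite addr0 in h.
by have := congr1 (fun z => z - cs_mul x 0) h; rewrite subrr addrK.
Qed.

Lemma cs_mulN x y : cs_mul x (- y) = - cs_mul x y.
Proof. by rewrite -scaleN1r cs_mulZr scaleN1r. Qed.

Lemma cs_mulB x y1 y2 : cs_mul x (y1 - y2) = cs_mul x y1 - cs_mul x y2.
Proof. by rewrite cs_mulDr cs_mulN. Qed.

Lemma cs_normZ' (a : C) x : cs_norm (a *: x) = nc a * cs_norm x.
Proof. by apply: complexI; rewrite cs_normZ rmorphM. Qed.

Lemma cs_norm0 : cs_norm (0 : B) = 0.
Proof. by rewrite -(scale0r (0 : B)) cs_normZ' nc0 mul0r. Qed.

Lemma cs_normN x : cs_norm (- x) = cs_norm x.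
Proof.
rewrite -scaleN1r cs_normZ' ncN.
by rewrite (_ : nc 1 = 1) ?mul1r //; exact: Normc.normc1.
Qed.

Lemma cs_norm_ge0 x : 0 <= cs_norm x.
Proof.
have := cs_normD x (- x); rewrite subrr cs_norm0 cs_normN; lra.
Qed.

Lemma cs_normB x y : cs_norm (x - y) = cs_norm (y - x).
Proof. by rewrite -cs_normN opprB. Qed.

Lemma cs_small x : (forall e : R, 0 < e -> cs_norm x < e) -> x = 0.
Proof.
move=> H; apply: cs_norm_eq0; apply/eqP; rewrite eq_le cs_norm_ge0 andbT.
apply/negP => /negP; rewrite -ltNge => hp.
by have := H _ hp; rewrite ltxx.
Qed.

Lemma half_pow_small (e : R) : 0 < e -> exists N, (2^-1) ^+ N < e.
Proof.
move=> e0; have h0 : 0 <= 1 / e by rewrite divr_ge0 // ltW.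
have hN := archi_boundP h0; set N := Num.Def.archi_bound _ in hN.
exists N.
have hN2 : (N%:R : R) < 2 ^+ N.
  by rewrite -natrX ltr_nat; apply: ltn_expl.
have p0 : (0 : R) < 2 ^+ N by apply: exprn_gt0.
rewrite exprVn -div1r ltr_pdivrMr //.
have : 1 / e < 2 ^+ N by apply: lt_trans hN hN2.
by rewrite ltr_pdivrMr // mulrC.
Qed.

Lemma neumann w : cs_norm w <= 1 / 2 -> exists y : B, y = w + cs_mul w y.
Proof.
move=> hw.
pose s k := iter k (fun y => w + cs_mul w y) (0 : B).
have sS : forall k, s k.+1 = w + cs_mul w (s k) by [].
have step : forall k, cs_norm (s k.+1 - s k) <= (2^-1) ^+ k.+1.
  elim=> [|k IH].
    by rewrite sS /= cs_mulx0 addr0 subr0 expr1; lra.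
  rewrite sS sS opprD addrACA subrr add0r -cs_mulB.
  apply: le_trans (cs_normM _ _) _.
  rewrite exprS; apply: ler_pM => //; [exact: cs_norm_ge0 | exact: cs_norm_ge0 | lra].
have tail : forall k m, cs_norm (s (k + m)%N - s k) <= (2^-1) ^+ k - (2^-1) ^+ (k + m).
  move=> k; elim=> [|m IH]; first by rewrite addn0 subrr cs_norm0 subrr.
  rewrite addnS.
  have -> : s (k + m).+1 - s k = (s (k + m).+1 - s (k + m)) + (s (k + m) - s k).
    by rewrite addrA subrK.
  apply: le_trans (cs_normD _ _) _.
  have := step (k + m)%N; rewrite !exprS => h1.
  have : (2^-1 : R) ^+ (k + m) = 2^-1 * (2^-1) ^+ (k + m) + 2^-1 * (2^-1) ^+ (k + m).
    rewrite -mulrDl; have -> : (2^-1 + 2^-1 : R) = 1 by field.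
    by rewrite mul1r.
  lra.
have powle : forall N j, (2^-1 : R) ^+ (N + j) <= (2^-1) ^+ N.
  move=> N j; rewrite exprD ler_piMr //; first by apply: exprn_ge0; lra.
  by apply: exprn_ile1; lra.
have pow0 : forall j, (0 : R) <= (2^-1) ^+ j by move=> j; apply: exprn_ge0; lra.
have [l Hl] : exists l, forall e : R, 0 < e -> exists N, forall m, (N <= m)%N ->
    cs_norm (s m - l) < e.
  apply: cs_complete => e e0.
  have [N HN] := half_pow_small e0.
  exists N => m k hm hk.
  wlog hkm : m k hm hk / (k <= m)%N.
    move=> W; case: (leqP k m) => h; first exact: W.
    by rewrite cs_normB; apply: W => //; apply: ltnW.
  have -> : m = (k + (m - k))%N by rewrite subnKC.
  have := tail k (m - k)%N; have := pow0 (k + (m - k))%N.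
  have := powle N (k - N)%N; rewrite subnKC // => h1 h2 h3; lra.
exists l; apply/eqP; rewrite -subr_eq0; apply/eqP; apply: cs_small => e e0.
have e2 : 0 < e / 2 by lra.
have [N HN] := Hl _ e2.
have h1 := HN N.+1 (leqnSn N); have h2 := HN N (leqnn N).
have -> : l - (w + cs_mul w l) = (l - s N.+1) + cs_mul w (s N - l).
  by rewrite sS cs_mulB (zmod_id l w (cs_mul w (s N))).
apply: le_lt_trans (cs_normD _ _) _; rewrite cs_normB.
have := cs_normM w (s N - l); have := cs_norm_ge0 (s N - l).
move=> h3 h4; nra.
Qed.

End CS.


Lemma lip (c : R -> R) (D : R -> R -> R) :
  (forall x y, c y - c x = (y - x) * D x y) ->
  (forall x y, 0 <= x -> x <= 1 -> 0 <= y -> y <= 1 -> -2 <= D x y <= 2) ->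
  forall x y, 0 <= x -> x <= 1 -> 0 <= y -> y <= 1 ->
     `|c y - c x| <= 2 * `|y - x|.
Proof.
move=> hD hb x y x0 x1 y0 y1; rewrite hD normrM mulrC.
apply: ler_wpM2r; first exact: normr_ge0.
by rewrite ler_norml; apply: hb.
Qed.

Definition hh (x : R) := x * (1 - x).
Definition hh2 (x : R) := hh x * hh x.
Definition c1 (x : R) := 1 - x.

Lemma lip_hh x y : 0 <= x -> x <= 1 -> 0 <= y -> y <= 1 ->
  `|hh y - hh x| <= 2 * `|y - x|.
Proof.
apply: (@lip hh (fun x y => 1 - x - y)).
  by move=> a b; rewrite /hh; ring.
by move=> a b a0 a1 b0 b1; apply/andP; split; lra.
Qed.

Lemma lip_hh2 x y : 0 <= x -> x <= 1 -> 0 <= y -> y <= 1 ->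
  `|hh2 y - hh2 x| <= 2 * `|y - x|.
Proof.
apply: (@lip hh2 (fun x y => (1 - x - y) * (hh y + hh x))).
  by move=> a b; rewrite /hh2 /hh; ring.
move=> a b a0 a1 b0 b1; rewrite /hh.
have ha : 0 <= a * (1 - a) <= 1 by apply/andP; split; nra.
have hb : 0 <= b * (1 - b) <= 1 by apply/andP; split; nra.
move: ha hb => /andP[ha1 ha2] /andP[hb1 hb2].
apply/andP; split; nra.
Qed.

Lemma lip_c1 x y : 0 <= x -> x <= 1 -> 0 <= y -> y <= 1 ->
  `|c1 y - c1 x| <= 2 * `|y - x|.
Proof.
apply: (@lip c1 (fun _ _ => -1)).
  by move=> a b; rewrite /c1; ring.
by move=> *; apply/andP; split; lra.
Qed.

Lemma end0 n (c : R) (M : 'M[C]_n) : c = 0 -> exists a, c%:C *: M = a%:M.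
Proof. by move=> ->; exists 0; rewrite rmorph0 scale0r raddf0. Qed.

Lemma end1 n (c : R) : exists a, c%:C *: (1%:M : 'M[C]_n) = a%:M.
Proof. by exists c%:C; rewrite scalemx1. Qed.

Lemma cf_mul n (a b : R -> R) (M1 M2 : 'M[C]_n) :
  (fun t => cf a M1 t *m cf b M2 t) = cf (fun x => a x * b x) (M1 *m M2).
Proof.
apply: functional_extensionality => t.
by rewrite /cf -scalemxAl -scalemxAr scalerA rmorphM.
Qed.

Lemma Dn_hh n (M : 'M[C]_n) : Dn (cf hh M).
Proof.
apply: Dn_cf; [exact: lip_hh | apply: end0; rewrite /hh; ring | apply: end0; rewrite /hh; ring].
Qed.

Lemma Dn_hh2 n (M : 'M[C]_n) : Dn (cf hh2 M).
Proof.
apply: Dn_cf; [exact: lip_hh2 | apply: end0; rewrite /hh2 /hh; ring | apply: end0; rewrite /hh2 /hh; ring].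
Qed.

Lemma Dn_c1 n : Dn (cf c1 (1%:M : 'M[C]_n)).
Proof. by apply: Dn_cf; [exact: lip_c1 | apply: end1 | apply: end1]. Qed.


Lemma close01 (a b : C) : (a = 0 \/ a = 1) -> b = 1 -> nc (a - b) < 1 -> a = 1.
Proof.
move=> [->|->] // ->; rewrite sub0r ncN (_ : nc 1 = 1) ?ltxx //.
exact: Normc.normc1.
Qed.

Lemma char_contra n (hn : (1 < n)%N) (B : cstar_alg R)
  (q : (unit_itv R * unit_itv R -> 'M[C]_(n * n)) -> B)
  (sigma : (unit_itv R -> 'M[C]_n) -> unit_itv R -> B) (i0 : 'I_(n * n)) :
  star_hom_on (tens_sq (@Dn R n)) q ->
  (forall b : B, exists2 F, tens_sq (@Dn R n) F & q F = b) ->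
  (forall F, tens_sq (@Dn R n) F -> q F = 0 -> F (itv0 R, itv1 R) i0 i0 = 0) ->
  (forall f, Dn f -> cs_cont (sigma f)) ->
  (forall t, star_hom_on (@Dn R n) (fun f => sigma f t)) ->
  (forall f, Dn f -> sigma f (itv0 R) = q (p0 f)) ->
  (forall f, Dn f -> sigma f (itv1 R) = q (p1 f)) -> False.
Proof.
move=> [qD [qZ [qM _]]] surj ker sc sh s0 s1.
set TSQ := tens_sq (@Dn R n).
have pre_ex : forall b : B, {F | TSQ F /\ q F = b}.
  move=> b; apply: constructive_indefinite_description.
  by have [F h1 h2] := surj b; exists F.
pose pre b := sval (pre_ex b).
have pre_ts : forall b, TSQ (pre b) by move=> b; case: (svalP (pre_ex b)).
have pre_q : forall b, q (pre b) = b by move=> b; case: (svalP (pre_ex b)).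
pose chi b := pre b (itv0 R, itv1 R) i0 i0.
have chiE : forall F, TSQ F -> chi (q F) = F (itv0 R, itv1 R) i0 i0.
  move=> F hF.
  have hH : TSQ (fun x => pre (q F) x + (-1) *: F x).
    by apply: tens_add; [apply: pre_ts | apply: tens_scale].
  have := ker _ hH.
  rewrite qD ?pre_q; [|apply: pre_ts| by apply: tens_scale].
  rewrite qZ // scaleN1r subrr => /(_ erefl).
  rewrite !mxE mulN1r => /eqP; rewrite subr_eq0 => /eqP h; exact: h.
have chi_add : forall b1 b2, chi (b1 + b2) = chi b1 + chi b2.
  move=> b1 b2; rewrite -{1}(pre_q b1) -{1}(pre_q b2) -qD; try exact: pre_ts.
  rewrite chiE; first by rewrite mxE.
  by apply: tens_add; apply: pre_ts.
have chi_scale : forall a b, chi (a *: b) = a * chi b.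
  move=> a b; rewrite -{1}(pre_q b) -qZ; try exact: pre_ts.
  rewrite chiE; first by rewrite mxE.
  by apply: tens_scale; apply: pre_ts.
have chi_mul : forall b1 b2, chi (cs_mul b1 b2) = chi b1 * chi b2.
  move=> b1 b2; rewrite -{1}(pre_q b1) -{1}(pre_q b2) -qM; try exact: pre_ts.
  rewrite chiE; first by rewrite (tens_scalar01 i0 (pre_ts b1)) mul_scalar_mx mxE.
  by apply: tens_mul; apply: pre_ts.
have chi_sub : forall b1 b2, chi (b1 - b2) = chi b1 - chi b2.
  by move=> b1 b2; rewrite -scaleN1r chi_add chi_scale mulN1r.
have chi_bound : forall b, nc (chi b) <= 2 * cs_norm b.
  move=> b; rewrite leNgt; apply/negP => hlt.
  have nb := cs_norm_ge0 b.
  set lam := chi b in hlt.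
  have nl : 0 < nc lam by lra.
  have lam0 : lam != 0 by apply/eqP => h; move: nl; rewrite h nc0 ltxx.
  have hw : cs_norm (lam^-1 *: b) <= 1 / 2.
    rewrite cs_normZ' Normc.normcV mulrC ler_pdivrMr //; lra.
  have [y hy] := neumann hw.
  have cw : chi (lam^-1 *: b) = 1 by rewrite chi_scale mulVf.
  have := congr1 chi hy; rewrite chi_add chi_mul cw mul1r => h.
  have : (1 : C) = 0.
    by have := congr1 (fun z => z - chi y) h; rewrite subrr addrK.
  by move/eqP; rewrite oner_eq0.
pose phi t f := chi (sigma f t).
have phi_add : forall t F G, Dn F -> Dn G ->
    phi t (fun x => F x + G x) = phi t F + phi t G.
  by move=> t F G hF hG; rewrite /phi; have [shD _] := sh t; rewrite shD // chi_add.
have phi_scale : forall t a F, Dn F -> phi t (fun x => a *: F x) = a * phi t F.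
  by move=> t a F hF; rewrite /phi; have [_ [shZ _]] := sh t; rewrite shZ // chi_scale.
have phi_mul : forall t F G, Dn F -> Dn G ->
    phi t (fun x => F x *m G x) = phi t F * phi t G.
  by move=> t F G hF hG; rewrite /phi; have [_ [_ [shM _]]] := sh t; rewrite shM // chi_mul.
have phi0 : forall t, phi t (fun _ => 0) = 0.
  move=> t.
  have -> : (fun _ : unit_itv R => (0 : 'M[C]_n)) = (fun x => 0 *: cf hh (0 : 'M_n) x).
    by apply: functional_extensionality => x; rewrite scale0r.
  by rewrite phi_scale ?mul0r //; exact: Dn_hh.
pose f := cf c1 (1%:M : 'M[C]_n).
have g01 : forall t, phi t f = 0 \/ phi t f = 1.
  move=> t.
  pose psi M := phi t (cf hh2 M).
  have psi_add : {morph psi : M1 M2 / M1 + M2 >-> M1 + M2}.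
    move=> M1 M2; rewrite /psi -phi_add; try exact: Dn_hh2.
    congr (phi t _); apply: functional_extensionality => x.
    by rewrite /cf scalerDr.
  have psi0 : psi 0 = 0.
    rewrite /psi -(phi0 t); congr (phi t _); apply: functional_extensionality => x.
    by rewrite /cf scaler0.
  have uu0 : forall a b : 'I_n, a != b -> phi t (cf hh (delta_mx a b)) = 0.
    move=> a b hab.
    have : phi t (cf hh (delta_mx a b)) * phi t (cf hh (delta_mx a b)) = 0.
      rewrite -phi_mul; try exact: Dn_hh.
      rewrite cf_mul mul_delta_mx_cond eq_sym (negbTE hab) mulr0n.
      exact: psi0.
    by move/eqP; rewrite mulf_eq0 orbb => /eqP.
  have psid : forall a : 'I_n, psi (delta_mx a a) = 0.
    move=> a.
    pose b : 'I_n := if val a == 0%N then Ordinal hn else Ordinal (ltn_trans (ltn0Sn 0) hn).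
    have hab : a != b.
      rewrite /b; case: ifP => h; apply/eqP => e; move: h; rewrite e //=.
    have e : delta_mx a b *m delta_mx b a = delta_mx a a :> 'M[C]_n by rewrite mul_delta_mx.
    rewrite /psi -e.
    have -> : cf hh2 (delta_mx a b *m delta_mx b a) =
        (fun x => cf hh (delta_mx a b) x *m cf hh (delta_mx b a) x).
      by rewrite cf_mul.
    by rewrite phi_mul ?(uu0 _ _ hab) ?mul0r //; exact: Dn_hh.
  have psi1 : psi 1%:M = 0.
    rewrite mx1_sum_delta (big_morph psi psi_add psi0).
    by apply: big1 => a _; apply: psid.
  pose k := cf hh (1%:M : 'M[C]_n).
  have k0 : phi t k = 0.
    have : phi t k * phi t k = 0.
      rewrite -phi_mul; try exact: Dn_hh.
      by rewrite /k cf_mul mulmx1; exact: psi1.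
    by move/eqP; rewrite mulf_eq0 orbb => /eqP.
  have fk : (fun x => f x + (-1) *: (f x *m f x)) = k.
    apply: functional_extensionality => x.
    have := congr1 (fun F => F x) (cf_mul c1 c1 1%:M 1%:M); rewrite /= => ->.
    rewrite /k /f /cf mulmx1 scalerA -scalerDl; congr (_ *: _).
    have -> : (-1 : C) = (-1 : R)%:C by rewrite rmorphN1.
    by rewrite -rmorphM -rmorphD /c1 /hh; congr (_%:C); ring.
  have hf : Dn f by exact: Dn_c1.
  have : phi t f - phi t f * phi t f = 0.
    rewrite -k0 -fk phi_add //; last by apply: Dn_scale; apply: Dn_mul.
    by rewrite phi_scale ?phi_mul ?mulN1r //; apply: Dn_mul.
  have -> : phi t f - phi t f * phi t f = phi t f * (1 - phi t f) by ring.
  move/eqP; rewrite mulf_eq0 subr_eq0 => /orP[/eqP h|/eqP h]; [left|right] => //.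
have hf : Dn f by exact: Dn_c1.
have g0 : phi (itv0 R) f = 1.
  rewrite /phi (s0 _ hf) chiE; last exact: tens_p0.
  rewrite /p0 /f /cf /c1 /= subr0 rmorph1 scale1r tens_scalars mulr1 mxE eqxx.
  by rewrite mulr1n.
have g1 : phi (itv1 R) f = 0.
  rewrite /phi (s1 _ hf) chiE; last exact: tens_p1.
  by rewrite /p1 /f /cf /c1 /= subrr rmorph0 scale0r tensmx0 mxE.
have gc : forall (x : unit_itv R) e, 0 < e -> exists2 d, 0 < d &
    forall y : unit_itv R, `|sval y - sval x| < d -> nc (phi y f - phi x f) < e.
  move=> x e e0; have e2 : 0 < e / 2 by lra.
  have [d d0 Hd] := sc _ hf x _ e2; exists d => // y hy.
  rewrite /phi -chi_sub; apply: le_lt_trans (chi_bound _) _; have := Hd y hy; lra.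
pose P s := forall t : unit_itv R, sval t <= s -> phi t f = 1.
have P1 : P 1.
  apply: real_ind.
  - move=> a b ba Pa t tb; apply: Pa; exact: le_trans ba.
  - move=> t t0; have -> : t = itv0 R.
      by apply: itv_eq; apply/eqP; rewrite eq_le t0 itv_ge0.
    exact: g0.
  - move=> x x0 x1; pose xx := mk_itv x0 x1.
    have [d d0 Hd] := gc xx 1 ltr01.
    exists d => // a b a0 ha hb Pa.
    have gx : phi xx f = 1.
      case: (lerP x a) => xa; first by apply: Pa.
      have a1 : a <= 1 by lra.
      pose aa := mk_itv a0 a1.
      have := Hd aa ha; rewrite ncB => h.
      exact: close01 (g01 xx) (Pa aa (lexx a)) h.
    move=> t tb; case: (lerP (sval t) a) => ta; first by apply: Pa.
    have ht : `|sval t - sval xx| < d.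
      move: ha hb; rewrite /= !ltr_norml => /andP[h1 h2] /andP[h3 h4].
      by apply/andP; split; lra.
    exact: close01 (g01 t) gx (Hd t ht).
have := P1 (itv1 R) (lexx _); rewrite g1 => /esym/eqP.
by rewrite oner_eq0.
Qed.


Lemma select_i n m (B : 'I_m -> cstar_alg R)
  (q : forall i, (unit_itv R * unit_itv R -> 'M[C]_(n * n)) -> B i)
  (i0 : 'I_(n * n)) :
  (forall i, star_hom_on (tens_sq (@Dn R n)) (q i)) ->
  (forall F, tens_sq (@Dn R n) F -> (forall i, q i F = 0) -> F = (fun _ => 0)) ->
  exists i, forall F, tens_sq (@Dn R n) F -> q i F = 0 ->
    F (itv0 R, itv1 R) i0 i0 = 0.
Proof.
move=> hq hker; apply: NNPP => hne.
have hF : forall i, exists F, tens_sq (@Dn R n) F /\ q i F = 0 /\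
    F (itv0 R, itv1 R) i0 i0 <> 0.
  move=> i; apply: NNPP => h; apply: hne; exists i => F hF hqF.
  apply: NNPP => hnz; apply: h; exists F; split => //.
have [Fi HFi] := fin_all_exists hF.
have ind : forall k, (k <= m)%N -> exists G, tens_sq (@Dn R n) G /\
    G (itv0 R, itv1 R) i0 i0 <> 0 /\ forall i : 'I_m, (i < k)%N -> q i G = 0.
  elim=> [_|k IH hk].
    exists (p0 (fun _ => (1%:M : 'M[C]_n))); split; first exact: tens_p0 (Dn_const1 n).
    split=> //; rewrite /p0 tens_scalars mulr1 mxE eqxx mulr1n; by apply/eqP; rewrite oner_neq0.
  have [G [hG [hG0 hGq]]] := IH (ltnW hk).
  pose ik : 'I_m := Ordinal hk.
  have [hFk [hFq hF0]] := HFi ik.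
  exists (fun x => G x *m Fi ik x); split; first exact: tens_mul.
  split.
    rewrite (tens_scalar01 i0 hG) mul_scalar_mx mxE.
    by apply/eqP; rewrite mulf_neq0 //; apply/eqP.
  move=> i hi; have [_ [_ [qM _]]] := hq i; rewrite qM //.
  case: (ltngtP i k) => hik.
  - by rewrite hGq // cs_mul0x.
  - by move: hi; rewrite ltnS leqNgt hik.
  - have -> : i = ik by apply: val_inj.
    by rewrite hFq cs_mulx0.
have [G [hG [hG0 hGq]]] := ind m (leqnn m).
apply: hG0; rewrite (hker G hG); first by rewrite mxE.
by move=> i; apply: hGq.
Qed.

End Aux.

Theorem mainTheorem18 (R : realType) (n : nat) (hn : (1 < n)%N) :
  TC_infinite (@Dn R n).
Proof.
move=> m [B [q [sigma [hq [hsurj [hker [hc [hs [h0 h1]]]]]]]]].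
have nn : (0 < n * n)%N by rewrite muln_gt0 (ltn_trans (ltn0Sn 0) hn).
pose i0 : 'I_(n * n) := Ordinal nn.
have [i Hi] := select_i i0 hq hker.
exact: (char_contra hn (hq i) (hsurj i) (Hi) (hc i) (hs i) (h0 i) (h1 i)).
Qed.
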